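(* Let $X^{(\kappa)}_N$ be a twisted affine type with dual Coxeter number $h^\vee$. In the abelian group $\mathcal{T}_0(X^{(\kappa)}_N)$ the following hold for all $a\in I_\sigma$, $u\in\mathbb{C}_{\kappa_a\hbar}$: (1) $T^{(a)}(u+h^\vee)=T^{(a)}(u)^{-1}$ if $X^{(\kappa)}_N=D^{(2)}_{r+1}$ with $r+1$ even or $X^{(\kappa)}_N=D^{(3)}_4$, and $T^{(a)}(u+h^\vee)=T^{(a)}(u+\Omega)^{-1}$ otherwise; (2) $T^{(a)}(u+2h^\vee)=T^{(a)}(u)$.
   Context: Fix $\hbar\in\mathbb{C}\setminus2\pi\sqrt{-1}\mathbb{Q}$; $\mathbb{C}_c:=\mathbb{C}/(2\pi\sqrt{-1}/c)\mathbb{Z}$. Types: $A^{(2)}_{2r-1}$ ($r\ge2$, $h^\vee=2r$), $A^{(2)}_{2r}$ ($r\ge1$, $h^\vee=2r+1$), $D^{(2)}_{r+1}$ ($r\ge3$, $h^\vee=2r$), $E^{(2)}_6$ ($h^\vee=12$), $D^{(3)}_4$ ($h^\vee=6$); $\kappa=3$ for $D^{(3)}_4$, else 2; $I_\sigma=\{1,\dots,r\}$ in the first three cases, $\{1,2,3,4\}$ for $E^{(2)}_6$, $\{1,2\}$ for $D^{(3)}_4$. $\kappa_a$: $A^{(2)}_{2r-1}$: $\kappa_a=1$ ($a<r$), $\kappa_r=2$; $A^{(2)}_{2r}$: all 1; $D^{(2)}_{r+1}$: $\kappa_a=2$ ($a<r$), $\kappa_r=1$; $E^{(2)}_6$: $\kappa_1=\kappa_2=1$,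 $\kappa_3=\kappa_4=2$; $D^{(3)}_4$: $\kappa_1=1$, $\kappa_2=3$. $\Omega=2\pi\sqrt{-1}/(\kappa\hbar)$. $\mathcal{T}_0(X^{(\kappa)}_N)$ is the abelian group (written multiplicatively) generated by $T^{(a)}(u)$ ($a\in I_\sigma$, $u\in\mathbb{C}_{\kappa_a\hbar}$) with relations $T^{(a)}(u-1)T^{(a)}(u+1)=M^{(a)}(u)$, $T^{(0)}(u)=1$, where: $A^{(2)}_{2r-1}$: $M^{(a)}=T^{(a-1)}(u)T^{(a+1)}(u)$ ($a\le r-1$), $M^{(r)}=T^{(r-1)}(u)T^{(r-1)}(u+\Omega)$; $A^{(2)}_{2r}$: $M^{(a)}=T^{(a-1)}(u)T^{(a+1)}(u)$ ($a\le r-1$), $M^{(r)}=T^{(r-1)}(u)T^{(r)}(u+\Omega)$; $D^{(2)}_{r+1}$: $M^{(a)}=T^{(a-1)}(u)T^{(a+1)}(u)$ ($a\le r-2$), $M^{(r-1)}=T^{(r-2)}(u)T^{(r)}(u)T^{(r)}(u+\Omega)$, $M^{(r)}=T^{(r-1)}(u)$; $E^{(2)}_6$: $M^{(1)}=T^{(2)}(u)$, $M^{(2)}=T^{(1)}(u)T^{(3)}(u)$, $M^{(3)}=T^{(2)}(u)T^{(2)}(u+\Omega)T^{(4)}(u)$, $M^{(4)}=T^{(3)}(u)$; $D^{(3)}_4$: $M^{(1)}=T^{(2)}(u)$, $M^{(2)}=T^{(1)}(u)T^{(1)}(u-\Omega)T^{(1)}(u+\Omega)$. *)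

(* Defs.v *)
From mathcomp Require Import all_boot all_algebra.
From mathcomp Require Import complex.
From mathcomp Require Import reals trigo.
Import GRing.Theory Num.Theory.
Set Implicit Arguments. Unset Strict Implicit. Unset Printing Implicit Defensive.
Local Open Scope ring_scope.

Inductive twisted_type : Type :=
| A2odd of nat   (* A^(2)_{2r-1}, r >= 2 *)
| A2even of nat  (* A^(2)_{2r},   r >= 1 *)
| D2 of nat      (* D^(2)_{r+1},  r >= 3 *)
| E26
| D34.

Definition tt_wf (X : twisted_type) : bool :=
  match X with
  | A2odd r => (2 <= r)%N | A2even r => (1 <= r)%N | D2 r => (3 <= r)%N
  | E26 => true | D34 => true end.

Definition rank (X : twisted_type) : nat :=
  match X with A2odd r | A2even r | D2 r => r | E26 => 4 | D34 => 2 end.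

Definition in_Isigma (X : twisted_type) (a : nat) : bool := (1 <= a <= rank X)%N.

Definition hvee (X : twisted_type) : nat :=
  match X with
  | A2odd r => 2 * r | A2even r => 2 * r + 1 | D2 r => 2 * r
  | E26 => 12 | D34 => 6 end%N.

Definition kappa (X : twisted_type) : nat := match X with D34 => 3 | _ => 2 end.

Definition kappa_a (X : twisted_type) (a : nat) : nat :=
  match X with
  | A2odd r => if a == r then 2 else 1
  | A2even _ => 1
  | D2 r => if a == r then 1 else 2
  | E26 => if (a <= 2)%N then 1 else 2
  | D34 => if a == 1%N then 1 else 3
  end.

(* D^(2)_{r+1} with r+1 even, or D^(3)_4 *)
Definition special_type (X : twisted_type) : bool :=
  match X with D2 r => odd r | D34 => true | _ => false end.

Section Twisted.
Variable R : realType.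
Local Notation C := (R[i]).

Definition twopii : C := 2 * (pi : R)%:C%C * 'i.

Definition Omega (X : twisted_type) (hb : C) : C := twopii / ((kappa X)%:R * hb).

(* the period defining C_{kappa_a hbar} = C / (2 pi sqrt(-1)/(kappa_a hbar)) Z *)
Definition period (X : twisted_type) (hb : C) (a : nat) : C :=
  twopii / ((kappa_a X a)%:R * hb).

Variable G : zmodType. (* abelian group, written additively *)

Definition Mrhs (X : twisted_type) (hb : C) (t : nat -> C -> G) (a : nat) (u : C) : G :=
  let W := Omega X hb in
  match X with
  | A2odd r => if (a <= r - 1)%N then t (a - 1)%N u + t (a + 1)%N u
               else t (r - 1)%N u + t (r - 1)%N (u + W)
  | A2even r => if (a <= r - 1)%N then t (a - 1)%N u + t (a + 1)%N u
                else t (r - 1)%N u + t r (u + W)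
  | D2 r => if (a <= r - 2)%N then t (a - 1)%N u + t (a + 1)%N u
            else if a == (r - 1)%N then t (r - 2)%N u + t r u + t r (u + W)
            else t (r - 1)%N u
  | E26 => match a with
           | 1 => t 2%N u
           | 2 => t 1%N u + t 3%N u
           | 3 => t 2%N u + t 2%N (u + W) + t 4%N u
           | _ => t 3%N u
           end
  | D34 => if a == 1%N then t 2%N u
           else t 1%N u + t 1%N (u - W) + t 1%N (u + W)
  end.

(* t is a family of elements T^(a)(u) of G, a in I_sigma, u in C_{kappa_a hbar}
   (represented by functions on C invariant under the period), with T^(0) = 1
   (i.e. 0 additively), satisfying the defining relations of T_0(X). *)
Definition T0_family (X : twisted_type) (hb : C) (t : nat -> C -> G) : Prop :=
  [/\ (forall u, t 0%N u = 0),
      (forall a, in_Isigma X a -> forall (u : C) (k : int),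
          t a (u + k%:~R * period X hb a) = t a u) &
      (forall a, in_Isigma X a -> forall u : C,
          t a (u - 1) + t a (u + 1) = Mrhs X hb t a u)].

End Twisted.

(* Main.v *)
Require Import Defs.
From mathcomp Require Import all_boot all_algebra.
From mathcomp Require Import complex.
From mathcomp Require Import reals trigo.
From mathcomp Require Import ring zify.
Import GRing.Theory Num.Theory.
Local Open Scope ring_scope.

Section Lin.
Variable G : zmodType.
Inductive lx := LA of nat | L0 | LD of lx & lx | LN of lx | LZ of lx & int.
Fixpoint ev (s : seq G) e := match e with LA i => nth 0 s i | L0 => 0
  | LD a b => ev s a + ev s b | LN a => - ev s a | LZ a k => ev s a *~ k end.
Fixpoint addv (c d : seq int) := match c, d with [::], _ => d | _, [::] => c
  | x::c', y::d' => (x+y) :: addv c' d' end.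
Fixpoint nf e : seq int := match e with LA i => rcons (nseq i 0) 1 | L0 => [::]
  | LD a b => addv (nf a) (nf b) | LN a => map -%R (nf a)
  | LZ a k => map ( *%R^~ k) (nf a) end.
Fixpoint lin (s : seq G) (c : seq int) := match c with [::] => 0
  | x :: c' => head 0 s *~ x + lin (behead s) c' end.
Lemma lin_add s c d : lin s (addv c d) = lin s c + lin s d.
Proof.
elim: c d s => [|x c IH] [|y d] s /=; rewrite ?add0r ?addr0 //.
by rewrite IH mulrzDr addrACA.
Qed.
Lemma lin_opp s c : lin s (map -%R c) = - lin s c.
Proof. elim: c s => [|x c IH] s /=; rewrite ?oppr0 // IH mulrNz opprD //. Qed.
Lemma lin_sc s c k : lin s (map ( *%R^~ k) c) = lin s c *~ k.
Proof. elim: c s => [|x c IH] s /=; rewrite ?mul0rz // IH mulrzDl mulrzA //. Qed.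
Lemma lin_at s i : lin s (rcons (nseq i 0) 1) = nth 0 s i.
Proof.
elim: i s => [|i IH] [|x s] /=; rewrite ?mulr1z ?addr0 ?mulr0z ?add0r ?IH ?nth_nil //.
Qed.
Lemma ev_lin s e : ev s e = lin s (nf e).
Proof.
elim: e => [i||a Ha b Hb|a Ha|a Ha k] /=.
- by rewrite lin_at.
- by [].
- by rewrite lin_add Ha Hb.
- by rewrite lin_opp Ha.
- by rewrite lin_sc Ha.
Qed.
Lemma lin0 s c : all (fun x => x == 0) c -> lin s c = 0.
Proof. elim: c s => [|x c IH] s //= /andP[/eqP -> H]; by rewrite mulr0z IH ?add0r. Qed.
Lemma ev_eq s e1 e2 : all (fun x => x == 0) (nf (LD e1 (LN e2))) -> ev s e1 = ev s e2.
Proof.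
move=> H; apply/eqP; rewrite -subr_eq0; apply/eqP.
by rewrite -[_ - _]/(ev s (LD e1 (LN e2))) ev_lin lin0.
Qed.
Lemma sub_eq0 (x y : G) : x = y -> x - y = 0.
Proof. by move=> ->; rewrite subrr. Qed.
End Lin.
Arguments sub_eq0 {G x y}.

Ltac lin_mem x l :=
  match l with
  | x :: _ => constr:(0%N)
  | _ :: ?l' => let n := lin_mem x l' in constr:(S n)
  end.
Ltac lin_addatom t l :=
  match constr:(tt) with
  | _ => let n := lin_mem t l in l
  | _ => constr:(t :: l)
  end.
Ltac lin_gather t l :=
  lazymatch t with
  | (?a + ?b)%R => let l1 := lin_gather a l in lin_gather b l1
  | (- ?a)%R => lin_gather a l
  | 0%R => l
  | (?a *~ _)%R => lin_gather a l
  | _ => lin_addatom t l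
  end.
Ltac lin_reify t l :=
  lazymatch t with
  | (?a + ?b)%R => let x := lin_reify a l in let y := lin_reify b l in constr:(LD x y)
  | (- ?a)%R => let x := lin_reify a l in constr:(LN x)
  | 0%R => constr:(L0)
  | (?a *~ ?k)%R => let x := lin_reify a l in constr:(LZ x k)
  | _ => let n := lin_mem t l in constr:(LA n)
  end.
Ltac lin_eq :=
  lazymatch goal with |- @eq (GRing.Zmodule.sort ?G) ?A ?B =>
    let l0 := constr:(@nil (GRing.Zmodule.sort G)) in
    let l1 := lin_gather A l0 in let l := lin_gather B l1 in
    let ea := lin_reify A l in let eb := lin_reify B l in
    change (@ev G l ea = @ev G l eb); apply: ev_eq; vm_compute; reflexivity
  | |- @eq ?T ?A ?B =>
    let l0 := constr:(@nil T) in
    let l1 := lin_gather A l0 in let l := lin_gather B l1 in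
    let ea := lin_reify A l in let eb := lin_reify B l in
    change (@ev _ l ea = @ev _ l eb); apply: ev_eq; vm_compute; reflexivity
  end.

Ltac lin_csum G hs :=
  lazymatch hs with
  | tt => constr:(@GRing.zero G)
  | ((?h, ?k), ?rest) => lazymatch type of h with ?l = ?r =>
       let s := lin_csum G rest in constr:(((l - r) *~ k + s)%R) end
  end.
Ltac lin_kill hs :=
  lazymatch hs with
  | tt => idtac
  | ((?h, _), ?rest) => rewrite (sub_eq0 h); lin_kill rest
  end.
Ltac lcomb hs :=
  lazymatch goal with |- @eq ?G _ _ =>
    let s := lin_csum G hs in
    apply/eqP; rewrite -subr_eq0; apply/eqP;
    transitivity s; [ lin_eq | lin_kill hs; rewrite ?mul0rz ?addr0 ?add0r; reflexivity ]
  end.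


Ltac canon_one x l :=
  lazymatch l with
  | ?y :: ?l' =>
     (try (lazymatch x with ?h ?a => lazymatch y with ?h ?b =>
        let E := fresh "E" in
        assert (E : y = x) by (congr (h _); ring);
        rewrite E; clear E end end));
     canon_one x l'
  | _ => idtac
  end.
Ltac canon_list l :=
  lazymatch l with
  | ?x :: ?l' => canon_one x l'; canon_list l'
  | _ => idtac
  end.
Ltac canon :=
  lazymatch goal with |- @eq ?T ?A ?B =>
    let l0 := constr:(@nil T) in
    let l1 := lin_gather A l0 in let l := lin_gather B l1 in canon_list l end.
Ltac lin := canon; lin_eq.
Ltac lc hs :=
  lazymatch goal with |- @eq ?G _ _ =>
    let s := lin_csum G hs in
    apply/eqP; rewrite -subr_eq0; apply/eqP;
    transitivity s; [ lin | lin_kill hs; rewrite ?mul0rz ?addr0 ?add0r; reflexivity ]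
  end.

Section SS.
Variables (R : realType) (G : zmodType).
Local Notation C := (R[i]).
Variable f : C -> G.
Fixpoint S (n : nat) (u : C) : G :=
  if n is n'.+1 then f (u - n'%:R) + S n' (u + 1) else 0.
Lemma S_S n u : S n.+1 u = f (u - n%:R) + S n (u + 1).
Proof. by []. Qed.
Lemma S_0 u : S 0 u = 0. Proof. by []. Qed.
Lemma S_right n u : S n.+1 u = S n (u - 1) + f (u + n%:R).
Proof.
elim: n u => [|n IH] u; first by rewrite !S_S !S_0; lin.
rewrite S_S IH S_S; lin.
Qed.
Lemma S_key n u : S n.+1 (u - 1) + S n.+1 (u + 1) = S n u + S n.+2 u.
Proof. rewrite !S_S; lin. Qed.
Lemma S_anti n c d : (forall v, f (v + c) = - f (v + d)) ->
  forall u, S n (u + c) = - S n (u + d).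
Proof.
move=> H; elim: n => [|n IH] u; first by rewrite !S_0 oppr0.
rewrite !S_S. have h1 := H (u - n%:R). have h2 := IH (u + 1).
lc ((h1, 1%Z), ((h2, 1%Z), tt)).
Qed.
Lemma S_per n c d : (forall v, f (v + c) = f (v + d)) ->
  forall u, S n (u + c) = S n (u + d).
Proof.
move=> H; elim: n => [|n IH] u; first by rewrite !S_0.
rewrite !S_S. have h1 := H (u - n%:R). have h2 := IH (u + 1).
lc ((h1, 1%Z), ((h2, 1%Z), tt)).
Qed.
End SS.
Arguments S {R G}.
Arguments S_S {R G}.
Arguments S_0 {R G}.
Arguments S_right {R G}.
Arguments S_key {R G}.
Arguments S_anti {R G f n c d}.
Arguments S_per {R G f n c d}.

Section Cases.
Variables (R : realType) (G : zmodType).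
Local Notation C := (R[i]).
Variable t : nat -> C -> G.
Variable W : C.
Hypothesis t0 : forall u, t 0%N u = 0.

Lemma chain m :
  (forall a u, (0 < a)%N -> (a < m)%N -> t a (u - 1) + t a (u + 1) = t a.-1 u + t a.+1 u) ->
  forall a, (a <= m)%N -> forall u, t a u = S (t 1%N) a u.
Proof.
move=> E a Ha.
suff H : forall b, (b < m)%N -> (forall u, t b u = S (t 1%N) b u) /\ (forall u, t b.+1 u = S (t 1%N) b.+1 u).
  case: a Ha => [|a] Ha; first by move=> u; rewrite t0 S_0.
  by case: (H a Ha).
elim=> [|b IH] Hb.
  split=> u; first by rewrite t0.
  rewrite S_S S_0; lin.
have [IH1 IH2] := IH (ltnW Hb). split=> // u.
have h := E b.+1 u isT Hb. rewrite /= !IH2 IH1 in h.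
have hk := S_key (t 1%N) b u.
lc ((h, (-1)%Z), ((hk, 1%Z), tt)).
Qed.

Lemma caseA2odd p :
 (forall a u, (0 < a)%N -> (a < p.+2)%N -> t a (u - 1) + t a (u + 1) = t a.-1 u + t a.+1 u) ->
 (forall u, t p.+2 (u - 1) + t p.+2 (u + 1) = t p.+1 u + t p.+1 (u + W)) ->
 (forall u, t p.+2 (u + W) = t p.+2 u) ->
 forall a, (a <= p.+2)%N -> forall u, t a (u + (2 * p.+2)%:R) = - t a (u + W).
Proof.
move=> E1 Er Pr.
have ch := @chain _ E1.
have Ef : forall v, t 1%N (v + (2 * p.+2)%:R) = - t 1%N (v + W).
  move=> v. set x := v + p.+2%:R.
  have H1 := S_key (t 1%N) p.+1 x.
  have H2 := Er x. rewrite !(ch p.+2 (leqnn _)) !(ch p.+1 (leqnSn _)) in H2.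
  have H3 := S_right (t 1%N) p.+2 x.
  have H5 := S_S (t 1%N) p.+1 (x + W - 1).
  have H6 := Pr (x - 1). rewrite !(ch p.+2 (leqnn _)) in H6.
  rewrite /x in H1 H2 H3 H5 H6.
  lc ((H3, (-1)%Z), ((H5, (-1)%Z), ((H6, 1%Z), ((H2, 1%Z), ((H1, (-1)%Z), tt))))).
move=> a Ha u. rewrite !(ch a Ha). exact: (S_anti Ef u).
Qed.

Lemma caseA2even p :
 (forall a u, (0 < a)%N -> (a < p.+1)%N -> t a (u - 1) + t a (u + 1) = t a.-1 u + t a.+1 u) ->
 (forall u, t p.+1 (u - 1) + t p.+1 (u + 1) = t p u + t p.+1 (u + W)) ->
 (forall u, t p.+1 (u + 2%:R * W) = t p.+1 u) ->
 forall a, (a <= p.+1)%N -> forall u, t a (u + (2 * p.+1 + 1)%:R) = - t a (u + W).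
Proof.
move=> E1 Er Pr.
have ch := @chain _ E1.
have Ef : forall v, t 1%N (v + (2 * p.+1 + 1)%:R) = - t 1%N (v + W).
  move=> v. set x := v + p.+1%:R.
  have KW := S_key (t 1%N) p (x + W).
  have EW := Er (x + W). rewrite !(ch p.+1 (leqnn _)) !(ch p (leqnSn _)) in EW.
  have DW := S_S (t 1%N) p.+1 (x + W).
  have K1 := S_key (t 1%N) p (x + 1).
  have E1' := Er (x + 1). rewrite !(ch p.+1 (leqnn _)) !(ch p (leqnSn _)) in E1'.
  have P := Pr x. rewrite !(ch p.+1 (leqnn _)) in P.
  have R1 := S_right (t 1%N) p.+1 (x + 1).
  rewrite /x in KW EW DW K1 E1' P R1.
  lc ((KW, (-1)%Z), ((EW, 1%Z), ((DW, (-1)%Z), ((K1, (-1)%Z), ((E1', 1%Z), ((P, 1%Z), ((R1, (-1)%Z), tt))))))).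
move=> a Ha u. rewrite !(ch a Ha). exact: (S_anti Ef u).
Qed.

Lemma caseD2 p :
 (forall a u, (0 < a)%N -> (a < p.+2)%N -> t a (u - 1) + t a (u + 1) = t a.-1 u + t a.+1 u) ->
 (forall u, t p.+2 (u - 1) + t p.+2 (u + 1) = t p.+1 u + t p.+3 u + t p.+3 (u + W)) ->
 (forall u, t p.+3 (u - 1) + t p.+3 (u + 1) = t p.+2 u) ->
 (forall u, t 1%N (u + W) = t 1%N (u + 0)) ->
 forall a, (a <= p.+3)%N -> forall u,
   if odd p.+3 then t a (u + (2 * p.+3)%:R) = - t a u
   else t a (u + (2 * p.+3)%:R) = - t a (u + W).
Proof.
move=> E1 Eb Ec Pf.
have ch := @chain _ E1.
have Ef : forall v, t 1%N (v + (2 * p.+3)%:R) = - t 1%N (v + 0).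
  move=> v. set x := v + p.+3%:R.
  have Km1 := S_key (t 1%N) p.+1 (x - 1).
  have Kp1 := S_key (t 1%N) p.+1 (x + 1).
  have Ebm := Eb (x - 1). rewrite !(ch p.+2 (leqnn _)) !(ch p.+1 (leqnSn _)) in Ebm.
  have Ebp := Eb (x + 1). rewrite !(ch p.+2 (leqnn _)) !(ch p.+1 (leqnSn _)) in Ebp.
  have Ec0 := Ec x. rewrite !(ch p.+2 (leqnn _)) in Ec0.
  have EcW := Ec (x + W). rewrite !(ch p.+2 (leqnn _)) in EcW.
  have PS := @S_per _ _ _ p.+2 _ _ Pf x.
  have K2 := S_key (t 1%N) p.+2 x.
  have D := S_S (t 1%N) p.+3 x.
  have Rt := S_right (t 1%N) p.+2 (x + 1).
  rewrite /x in Km1 Kp1 Ebm Ebp Ec0 EcW PS K2 D Rt.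
  lc ((Km1, (-1)%Z), ((Kp1, (-1)%Z), ((Ebm, 1%Z), ((Ebp, 1%Z), ((Ec0, 1%Z), ((EcW, 1%Z),
     ((PS, 1%Z), ((K2, (-1)%Z), ((D, (-1)%Z), ((Rt, (-1)%Z), tt)))))))))).
have St4 : forall v, t p.+3 (v + 4) = t p.+3 v + t 1%N (v + p.+3%:R + 1) + t 1%N (v + p.+3%:R + 3).
  move=> v.
  have Ec1 := Ec (v + 1). rewrite !(ch p.+2 (leqnn _)) in Ec1.
  have Ec3 := Ec (v + 3). rewrite !(ch p.+2 (leqnn _)) in Ec3.
  have SS := S_S (t 1%N) p.+2 (v + 2).
  have SR := S_right (t 1%N) p.+2 (v + 2).
  have Ef' := Ef (v + 3 - p.+3%:R).
  lc ((Ec1, (-1)%Z), ((Ec3, 1%Z), ((SS, (-1)%Z), ((SR, 1%Z), ((Ef', (-1)%Z), tt))))).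
have L : forall j v, t p.+3 (v + (4 * j)%:R) = t p.+3 v + S (t 1%N) (2 * j) (v + p.+3%:R + (2 * j)%:R).
  elim=> [|j IH] v.
    rewrite muln0 S_0. lin.
  have IH' := IH v.
  have S4 := St4 (v + (4 * j)%:R).
  have R1 := S_right (t 1%N) (2 * j).+1 (v + p.+3%:R + (2 * j).+2%:R).
  have R2 := S_right (t 1%N) (2 * j) (v + p.+3%:R + (2 * j).+2%:R - 1).
  rewrite (_ : (2 * j.+1 = (2 * j).+2)%N); last by lia.
  lc ((S4, 1%Z), ((IH', 1%Z), ((R1, (-1)%Z), ((R2, (-1)%Z), tt)))).
move=> a Ha u.
have [Hlt|Heq] : (a <= p.+2)%N \/ a = p.+3 by lia.
  have A := S_anti Ef u (n := a). have P := S_per Pf u (n := a).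
  rewrite !(ch a Hlt). case: ifP => _.
    lc ((A, 1%Z), tt).
  lc ((A, 1%Z), ((P, 1%Z), tt)).
subst a.
have [q [hp|hp]] : exists q, p = 2 * q \/ p = (2 * q).+1.
  exists p./2. case: (odd p) (odd_double_half p) => /= hp; [right|left];
  rewrite -{1}hp -mul2n; lia.
- subst p. rewrite (_ : odd (2 * q).+3 = true); last by rewrite /= oddM.
  have L1 := L q.+1 (u + 2).
  rewrite (_ : (2 * q.+1 = (2 * q).+2)%N) in L1; last by lia.
  have A := S_anti Ef (u + 1) (n := (2 * q).+2).
  have Ec1 := Ec (u + 1). rewrite !(ch (2 * q).+2 (leqnn _)) in Ec1.
  lc ((L1, 1%Z), ((A, 1%Z), ((Ec1, 1%Z), tt))).
- subst p. rewrite (_ : odd (2 * q).+4 = false); last by rewrite /= oddM.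
  have L1 := L q.+2 u.
  rewrite (_ : (2 * q.+2 = (2 * q).+4)%N) in L1; last by lia.
  have A := S_anti Ef u (n := (2 * q).+4).
  have Km := S_key (t 1%N) (2 * q).+2 u.
  have Eb0 := Eb u. rewrite !(ch (2 * q).+3 (leqnn _)) !(ch (2 * q).+2 (leqnSn _)) in Eb0.
  lc ((L1, 1%Z), ((A, 1%Z), ((Km, 1%Z), ((Eb0, (-1)%Z), tt)))).
Qed.
End Cases.

Ltac lcn hs :=
  lazymatch goal with |- @eq ?G _ _ =>
    let s := lin_csum G hs in
    apply/eqP; rewrite -subr_eq0; apply/eqP;
    transitivity s; [ lin_eq | lin_kill hs; rewrite ?mul0rz ?addr0 ?add0r; reflexivity ]
  end.

Section E26.
Variables (R : realType) (G : zmodType).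
Local Notation C := (R[i]).
Variable t : nat -> C -> G.
Variable W : C.
Hypothesis E1 : forall v, t 1%N (v - 1) + t 1%N (v + 1) = t 2%N v.
Hypothesis E2 : forall v, t 2%N (v - 1) + t 2%N (v + 1) = t 1%N v + t 3%N v.
Hypothesis E3 : forall v, t 3%N (v - 1) + t 3%N (v + 1) = t 2%N v + t 2%N (v + W) + t 4%N v.
Hypothesis E4 : forall v, t 4%N (v - 1) + t 4%N (v + 1) = t 3%N v.
Hypothesis P1 : forall v, t 1%N (v + 2%:R * W) = t 1%N v.
Hypothesis P2 : forall v, t 2%N (v + 2%:R * W) = t 2%N v.
Hypothesis P3 : forall v, t 3%N (v + W) = t 3%N v.
Hypothesis P4 : forall v, t 4%N (v + W) = t 4%N v.
Variable u : C.
Let g (a : nat) (k m : int) : G := t a (u + k%:~R + m%:~R * W).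
Let E1g (k m km kp : int) : km = k - 1 -> kp = k + 1 -> g 1 km m + g 1 kp m = g 2 k m.
Proof. move=> -> ->; rewrite /g; have h := E1 (u + k%:~R + m%:~R * W); lc ((h, 1%Z), tt). Qed.
Let E2g (k m km kp : int) : km = k - 1 -> kp = k + 1 -> g 2 km m + g 2 kp m = g 1 k m + g 3 k m.
Proof. move=> -> ->; rewrite /g; have h := E2 (u + k%:~R + m%:~R * W); lc ((h, 1%Z), tt). Qed.
Let E3g (k m km kp mp : int) : km = k - 1 -> kp = k + 1 -> mp = m + 1 ->
  g 3 km m + g 3 kp m = g 2 k m + g 2 k mp + g 4 k m.
Proof. move=> -> -> ->; rewrite /g; have h := E3 (u + k%:~R + m%:~R * W); lc ((h, 1%Z), tt). Qed.
Let E4g (k m km kp : int) : km = k - 1 -> kp = k + 1 -> g 4 km m + g 4 kp m = g 3 k m.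
Proof. move=> -> ->; rewrite /g; have h := E4 (u + k%:~R + m%:~R * W); lc ((h, 1%Z), tt). Qed.
Let P1g (k m mp : int) : mp = m + 2 -> g 1 k mp = g 1 k m.
Proof. move=> ->; rewrite /g; have h := P1 (u + k%:~R + m%:~R * W); lc ((h, 1%Z), tt). Qed.
Let P2g (k m mp : int) : mp = m + 2 -> g 2 k mp = g 2 k m.
Proof. move=> ->; rewrite /g; have h := P2 (u + k%:~R + m%:~R * W); lc ((h, 1%Z), tt). Qed.
Let P3g (k m mp : int) : mp = m + 1 -> g 3 k mp = g 3 k m.
Proof. move=> ->; rewrite /g; have h := P3 (u + k%:~R + m%:~R * W); lc ((h, 1%Z), tt). Qed.
Let P4g (k m mp : int) : mp = m + 1 -> g 4 k mp = g 4 k m.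
Proof. move=> ->; rewrite /g; have h := P4 (u + k%:~R + m%:~R * W); lc ((h, 1%Z), tt). Qed.
Let G1 : g 1 12 0 = - g 1 0 1.
Proof.
  have h0 := P2g (-1) (1) (3) erefl.
  have h1 := E3g (5) (0) (4) (6) (1) erefl erefl erefl.
  have h2 := E3g (-1) (1) (-2) (0) (2) erefl erefl erefl.
  have h3 := E3g (7) (1) (6) (8) (2) erefl erefl erefl.
  have h4 := E3g (9) (0) (8) (10) (1) erefl erefl erefl.
  have h5 := P2g (1) (1) (3) erefl.
  have h6 := E4g (2) (1) (1) (3) erefl erefl.
  have h7 := E4g (6) (1) (5) (7) erefl erefl.
  have h8 := E1g (3) (2) (2) (4) erefl erefl.
  have h9 := E2g (8) (1) (7) (9) erefl erefl.
  have h10 := E4g (0) (1) (-1) (1) erefl erefl.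
  have h11 := E1g (1) (0) (0) (2) erefl erefl.
  have h12 := E4g (6) (0) (5) (7) erefl erefl.
  have h13 := E3g (5) (1) (4) (6) (2) erefl erefl erefl.
  have h14 := E1g (7) (1) (6) (8) erefl erefl.
  have h15 := E1g (1) (2) (0) (2) erefl erefl.
  have h16 := E3g (3) (1) (2) (4) (2) erefl erefl erefl.
  have h17 := E2g (0) (0) (-1) (1) erefl erefl.
  have h18 := E4g (2) (2) (1) (3) erefl erefl.
  have h19 := E3g (3) (2) (2) (4) (3) erefl erefl erefl.
  have h20 := E2g (10) (0) (9) (11) erefl erefl.
  have h21 := E4g (4) (2) (3) (5) erefl erefl.
  have h22 := E2g (6) (1) (5) (7) erefl erefl.
  have h23 := E2g (4) (0) (3) (5) erefl erefl.
  have h24 := E1g (11) (0) (10) (12) erefl erefl.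
  have h25 := E3g (-1) (0) (-2) (0) (1) erefl erefl erefl.
  have h26 := P3g (-2) (1) (2) erefl.
  have h27 := P2g (3) (1) (3) erefl.
  have h28 := P2g (5) (1) (3) erefl.
  have h29 := E1g (3) (0) (2) (4) erefl erefl.
  have h30 := E2g (6) (2) (5) (7) erefl erefl.
  have h31 := P4g (-1) (0) (1) erefl.
  have h32 := P3g (-2) (0) (1) erefl.
  have h33 := E1g (5) (2) (4) (6) erefl erefl.
  have h34 := E4g (8) (0) (7) (9) erefl erefl.
  have h35 := E3g (1) (2) (0) (2) (3) erefl erefl erefl.
  have h36 := E2g (2) (1) (1) (3) erefl erefl.
  have h37 := E3g (-1) (2) (-2) (0) (3) erefl erefl erefl.
  have h38 := E3g (5) (2) (4) (6) (3) erefl erefl erefl.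
  have h39 := E3g (1) (1) (0) (2) (2) erefl erefl erefl.
  have h40 := E1g (1) (1) (0) (2) erefl erefl.
  have h41 := E4g (0) (2) (-1) (1) erefl erefl.
  have h42 := E2g (4) (2) (3) (5) erefl erefl.
  have h43 := E2g (0) (2) (-1) (1) erefl erefl.
  lcn ((h0, (-2)%Z), ((h1, (-1)%Z), ((h2, (1)%Z), ((h3, (1)%Z), ((h4, (1)%Z), ((h5, (-1)%Z), ((h6, (-1)%Z), ((h7, (1)%Z), ((h8, (1)%Z), ((h9, (1)%Z), ((h10, (2)%Z), ((h11, (1)%Z), ((h12, (-1)%Z), ((h13, (1)%Z), ((h14, (1)%Z), ((h15, (-1)%Z), ((h16, (-1)%Z), ((h17, (1)%Z), ((h18, (1)%Z), ((h19, (2)%Z), ((h20, (1)%Z), ((h21, (1)%Z), ((h22, (1)%Z), ((h23, (-1)%Z), ((h24, (1)%Z), ((h25, (1)%Z), ((h26, (2)%Z), ((h27, (2)%Z), ((h28, (1)%Z), ((h29, (-1)%Z), ((h30, (1)%Z), ((h31, (-1)%Z), ((h32, (1)%Z), ((h33, (1)%Z), ((h34, (1)%Z), ((h35, (-1)%Z), ((h36, (1)%Z), ((h37, (-2)%Z), ((h38, (1)%Z), ((h39, (1)%Z), ((h40, (1)%Z), ((h41, (-2)%Z), ((h42, (2)%Z), ((h43, (-1)%Z), tt)))))))))))))))))))))))))))))))))))))))))))).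
Qed.
Let G2 : g 2 12 0 = - g 2 0 1.
Proof.
  have h0 := E2g (11) (0) (10) (12) erefl erefl.
  have h1 := P2g (0) (1) (3) erefl.
  have h2 := P3g (-1) (0) (1) erefl.
  have h3 := P2g (6) (1) (3) erefl.
  have h4 := E4g (3) (1) (2) (4) erefl erefl.
  have h5 := E4g (5) (2) (4) (6) erefl erefl.
  have h6 := E2g (9) (0) (8) (10) erefl erefl.
  have h7 := P4g (-2) (1) (2) erefl.
  have h8 := E3g (4) (2) (3) (5) (3) erefl erefl erefl.
  have h9 := E1g (6) (2) (5) (7) erefl erefl.
  have h10 := P4g (-2) (0) (1) erefl.
  have h11 := E2g (-1) (2) (-2) (0) erefl erefl.
  have h12 := E3g (0) (2) (-1) (1) (3) erefl erefl erefl.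
  have h13 := E4g (1) (2) (0) (2) erefl erefl.
  have h14 := E1g (4) (0) (3) (5) erefl erefl.
  have h15 := E4g (5) (1) (4) (6) erefl erefl.
  have h16 := E3g (6) (0) (5) (7) (1) erefl erefl erefl.
  have h17 := E3g (8) (1) (7) (9) (2) erefl erefl erefl.
  have h18 := E4g (9) (0) (8) (10) erefl erefl.
  have h19 := E2g (7) (2) (6) (8) erefl erefl.
  have h20 := E2g (7) (1) (6) (8) erefl erefl.
  have h21 := E1g (10) (0) (9) (11) erefl erefl.
  have h22 := E4g (7) (1) (6) (8) erefl erefl.
  have h23 := E1g (0) (0) (-1) (1) erefl erefl.
  have h24 := E2g (3) (2) (2) (4) erefl erefl.
  have h25 := E1g (6) (1) (5) (7) erefl erefl.
  have h26 := E2g (3) (1) (2) (4) erefl erefl.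
  have h27 := E2g (9) (1) (8) (10) erefl erefl.
  have h28 := E2g (1) (2) (0) (2) erefl erefl.
  have h29 := P2g (4) (1) (3) erefl.
  have h30 := E4g (5) (0) (4) (6) erefl erefl.
  have h31 := E4g (3) (2) (2) (4) erefl erefl.
  have h32 := E2g (-1) (0) (-2) (0) erefl erefl.
  have h33 := E2g (1) (1) (0) (2) erefl erefl.
  have h34 := E2g (5) (2) (4) (6) erefl erefl.
  have h35 := E3g (0) (0) (-1) (1) (1) erefl erefl erefl.
  have h36 := E3g (6) (2) (5) (7) (3) erefl erefl erefl.
  have h37 := E1g (8) (1) (7) (9) erefl erefl.
  have h38 := E4g (-1) (2) (-2) (0) erefl erefl.
  have h39 := P2g (2) (1) (3) erefl.
  have h40 := E1g (2) (1) (1) (3) erefl erefl.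
  have h41 := E1g (4) (2) (3) (5) erefl erefl.
  have h42 := E3g (4) (0) (3) (5) (1) erefl erefl erefl.
  have h43 := E1g (0) (2) (-1) (1) erefl erefl.
  have h44 := P2g (-2) (0) (2) erefl.
  have h45 := E4g (1) (1) (0) (2) erefl erefl.
  have h46 := E2g (3) (0) (2) (4) erefl erefl.
  have h47 := E3g (0) (1) (-1) (1) (2) erefl erefl erefl.
  have h48 := E3g (6) (1) (5) (7) (2) erefl erefl erefl.
  have h49 := E4g (-1) (1) (-2) (0) erefl erefl.
  have h50 := E3g (10) (0) (9) (11) (1) erefl erefl erefl.
  have h51 := E2g (5) (0) (4) (6) erefl erefl.
  have h52 := E3g (8) (0) (7) (9) (1) erefl erefl erefl.
  have h53 := E2g (5) (1) (4) (6) erefl erefl.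
  have h54 := E4g (-1) (0) (-2) (0) erefl erefl.
  have h55 := E2g (1) (0) (0) (2) erefl erefl.
  have h56 := E3g (2) (2) (1) (3) (3) erefl erefl erefl.
  lcn ((h0, (1)%Z), ((h1, (-3)%Z), ((h2, (-1)%Z), ((h3, (1)%Z), ((h4, (-1)%Z), ((h5, (1)%Z), ((h6, (1)%Z), ((h7, (2)%Z), ((h8, (3)%Z), ((h9, (1)%Z), ((h10, (1)%Z), ((h11, (-1)%Z), ((h12, (-3)%Z), ((h13, (-1)%Z), ((h14, (-1)%Z), ((h15, (1)%Z), ((h16, (-1)%Z), ((h17, (1)%Z), ((h18, (1)%Z), ((h19, (1)%Z), ((h20, (2)%Z), ((h21, (1)%Z), ((h22, (1)%Z), ((h23, (1)%Z), ((h24, (2)%Z), ((h25, (1)%Z), ((h26, (1)%Z), ((h27, (1)%Z), ((h28, (-1)%Z), ((h29, (3)%Z), ((h30, (-1)%Z), ((h31, (2)%Z), ((h32, (1)%Z), ((h33, (1)%Z), ((h34, (3)%Z), ((h35, (1)%Z), ((h36, (1)%Z), ((h37, (1)%Z), ((h38, (-2)%Z), ((h39, (1)%Z), ((h40, (1)%Z), ((h41, (2)%Z), ((h42, (-1)%Z), ((h43, (-1)%Z), ((h44, (1)%Z), ((h45, (1)%Z), ((h46, (-1)%Z), ((h47, (2)%Z), ((h48, (2)%Z), ((h49, (1)%Z), ((h50, (1)%Z), ((h51, (-1)%Z), ((h52, (1)%Z), ((h53, (1)%Z), ((h54, (1)%Z), ((h55, (1)%Z), ((h56, (1)%Z), 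tt))))))))))))))))))))))))))))))))))))))))))))))))))))))))).
Qed.
Let G3 : g 3 12 0 = - g 3 0 1.
Proof.
  have h0 := P2g (-1) (1) (3) erefl.
  have h1 := E3g (5) (0) (4) (6) (1) erefl erefl erefl.
  have h2 := E3g (7) (1) (6) (8) (2) erefl erefl erefl.
  have h3 := E3g (9) (0) (8) (10) (1) erefl erefl erefl.
  have h4 := E1g (-1) (2) (-2) (0) erefl erefl.
  have h5 := P2g (1) (1) (3) erefl.
  have h6 := E4g (2) (1) (1) (3) erefl erefl.
  have h7 := E4g (6) (1) (5) (7) erefl erefl.
  have h8 := E1g (3) (2) (2) (4) erefl erefl.
  have h9 := E2g (8) (1) (7) (9) erefl erefl.
  have h10 := E1g (9) (1) (8) (10) erefl erefl.
  have h11 := E4g (0) (0) (-1) (1) erefl erefl.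
  have h12 := E3g (5) (1) (4) (6) (2) erefl erefl erefl.
  have h13 := E1g (7) (1) (6) (8) erefl erefl.
  have h14 := E4g (6) (2) (5) (7) erefl erefl.
  have h15 := E3g (7) (2) (6) (8) (3) erefl erefl erefl.
  have h16 := E4g (10) (0) (9) (11) erefl erefl.
  have h17 := E4g (4) (0) (3) (5) erefl erefl.
  have h18 := E3g (3) (1) (2) (4) (2) erefl erefl erefl.
  have h19 := E2g (0) (0) (-1) (1) erefl erefl.
  have h20 := P1g (-2) (0) (2) erefl.
  have h21 := E3g (11) (0) (10) (12) (1) erefl erefl erefl.
  have h22 := E3g (3) (2) (2) (4) (3) erefl erefl erefl.
  have h23 := E2g (10) (0) (9) (11) erefl erefl.
  have h24 := E4g (4) (2) (3) (5) erefl erefl.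
  have h25 := E2g (6) (1) (5) (7) erefl erefl.
  have h26 := E1g (3) (1) (2) (4) erefl erefl.
  have h27 := E1g (9) (0) (8) (10) erefl erefl.
  have h28 := E2g (4) (0) (3) (5) erefl erefl.
  have h29 := E2g (2) (2) (1) (3) erefl erefl.
  have h30 := E3g (-1) (0) (-2) (0) (1) erefl erefl erefl.
  have h31 := P3g (-2) (1) (2) erefl.
  have h32 := P2g (3) (1) (3) erefl.
  have h33 := E2g (6) (0) (5) (7) erefl erefl.
  have h34 := P2g (5) (1) (3) erefl.
  have h35 := E3g (3) (0) (2) (4) (1) erefl erefl erefl.
  have h36 := E1g (7) (2) (6) (8) erefl erefl.
  have h37 := E2g (6) (2) (5) (7) erefl erefl.
  have h38 := P2g (-1) (0) (2) erefl.
  have h39 := P3g (-2) (0) (1) erefl.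
  have h40 := E1g (5) (0) (4) (6) erefl erefl.
  have h41 := E1g (5) (2) (4) (6) erefl erefl.
  have h42 := E3g (9) (1) (8) (10) (2) erefl erefl erefl.
  have h43 := E2g (8) (2) (7) (9) erefl erefl.
  have h44 := E3g (1) (2) (0) (2) (3) erefl erefl erefl.
  have h45 := E2g (2) (1) (1) (3) erefl erefl.
  have h46 := E1g (5) (1) (4) (6) erefl erefl.
  have h47 := E2g (4) (1) (3) (5) erefl erefl.
  have h48 := E3g (-1) (2) (-2) (0) (3) erefl erefl erefl.
  have h49 := E3g (5) (2) (4) (6) (3) erefl erefl erefl.
  have h50 := E4g (8) (1) (7) (9) erefl erefl.
  have h51 := E2g (8) (0) (7) (9) erefl erefl.
  have h52 := E3g (1) (1) (0) (2) (2) erefl erefl erefl.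
  have h53 := E2g (10) (1) (9) (11) erefl erefl.
  have h54 := E4g (0) (2) (-1) (1) erefl erefl.
  have h55 := E2g (4) (2) (3) (5) erefl erefl.
  have h56 := E3g (1) (0) (0) (2) (1) erefl erefl erefl.
  have h57 := E1g (-1) (0) (-2) (0) erefl erefl.
  have h58 := E2g (0) (2) (-1) (1) erefl erefl.
  have h59 := P2g (7) (1) (3) erefl.
  lcn ((h0, (-1)%Z), ((h1, (-1)%Z), ((h2, (2)%Z), ((h3, (1)%Z), ((h4, (-1)%Z), ((h5, (-1)%Z), ((h6, (1)%Z), ((h7, (1)%Z), ((h8, (1)%Z), ((h9, (2)%Z), ((h10, (1)%Z), ((h11, (1)%Z), ((h12, (1)%Z), ((h13, (1)%Z), ((h14, (1)%Z), ((h15, (1)%Z), ((h16, (1)%Z), ((h17, (-1)%Z), ((h18, (1)%Z), ((h19, (1)%Z), ((h20, (1)%Z), ((h21, (1)%Z), ((h22, (2)%Z), ((h23, (1)%Z), ((h24, (2)%Z), ((h25, (2)%Z), ((h26, (1)%Z), ((h27, (1)%Z), ((h28, (-1)%Z), ((h29, (1)%Z), ((h30, (1)%Z), ((h31, (1)%Z), ((h32, (2)%Z), ((h33, (-1)%Z), ((h34, (3)%Z), ((h35, (-1)%Z), ((h36, (1)%Z), ((h37, (3)%Z), ((h38, (-1)%Z), ((h39, (1)%Z), ((h40, (-1)%Z), ((h41, (2)%Z), ((h42, (1)%Z), ((h43, (1)%Z), ((h44, (-1)%Z), ((h45, (1)%Z), ((h46, (1)%Z), ((h47, (2)%Z), ((h48,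 (-1)%Z), ((h49, (3)%Z), ((h50, (1)%Z), ((h51, (1)%Z), ((h52, (1)%Z), ((h53, (1)%Z), ((h54, (-1)%Z), ((h55, (3)%Z), ((h56, (1)%Z), ((h57, (1)%Z), ((h58, (-1)%Z), ((h59, (1)%Z), tt)))))))))))))))))))))))))))))))))))))))))))))))))))))))))))).
Qed.
Let G4 : g 4 12 0 = - g 4 0 1.
Proof.
  have h0 := P2g (0) (1) (3) erefl.
  have h1 := E4g (11) (0) (10) (12) erefl erefl.
  have h2 := E3g (2) (1) (1) (3) (2) erefl erefl erefl.
  have h3 := P2g (6) (1) (3) erefl.
  have h4 := E4g (5) (2) (4) (6) erefl erefl.
  have h5 := E2g (9) (0) (8) (10) erefl erefl.
  have h6 := E3g (4) (2) (3) (5) (3) erefl erefl erefl.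
  have h7 := E2g (-1) (2) (-2) (0) erefl erefl.
  have h8 := E3g (0) (2) (-1) (1) (3) erefl erefl erefl.
  have h9 := E4g (1) (2) (0) (2) erefl erefl.
  have h10 := E3g (8) (1) (7) (9) (2) erefl erefl erefl.
  have h11 := E2g (7) (2) (6) (8) erefl erefl.
  have h12 := E2g (7) (1) (6) (8) erefl erefl.
  have h13 := E4g (7) (1) (6) (8) erefl erefl.
  have h14 := E2g (3) (2) (2) (4) erefl erefl.
  have h15 := E4g (1) (0) (0) (2) erefl erefl.
  have h16 := E1g (8) (0) (7) (9) erefl erefl.
  have h17 := E2g (3) (1) (2) (4) erefl erefl.
  have h18 := E2g (9) (1) (8) (10) erefl erefl.
  have h19 := E1g (4) (1) (3) (5) erefl erefl.
  have h20 := E1g (6) (0) (5) (7) erefl erefl.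
  have h21 := P1g (-1) (0) (2) erefl.
  have h22 := P2g (4) (1) (3) erefl.
  have h23 := E4g (3) (0) (2) (4) erefl erefl.
  have h24 := E4g (3) (2) (2) (4) erefl erefl.
  have h25 := E2g (-1) (0) (-2) (0) erefl erefl.
  have h26 := E2g (5) (2) (4) (6) erefl erefl.
  have h27 := E3g (0) (0) (-1) (1) (1) erefl erefl erefl.
  have h28 := E3g (6) (2) (5) (7) (3) erefl erefl erefl.
  have h29 := E1g (8) (1) (7) (9) erefl erefl.
  have h30 := E1g (4) (2) (3) (5) erefl erefl.
  have h31 := E3g (4) (0) (3) (5) (1) erefl erefl erefl.
  have h32 := P2g (-2) (0) (2) erefl.
  have h33 := E4g (1) (1) (0) (2) erefl erefl.
  have h34 := E3g (6) (1) (5) (7) (2) erefl erefl erefl.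
  have h35 := E3g (10) (0) (9) (11) (1) erefl erefl erefl.
  have h36 := E2g (5) (0) (4) (6) erefl erefl.
  have h37 := E2g (5) (1) (4) (6) erefl erefl.
  have h38 := E1g (6) (2) (5) (7) erefl erefl.
  lcn ((h0, (-1)%Z), ((h1, (1)%Z), ((h2, (1)%Z), ((h3, (1)%Z), ((h4, (1)%Z), ((h5, (1)%Z), ((h6, (2)%Z), ((h7, (-1)%Z), ((h8, (-1)%Z), ((h9, (-1)%Z), ((h10, (1)%Z), ((h11, (1)%Z), ((h12, (1)%Z), ((h13, (1)%Z), ((h14, (1)%Z), ((h15, (1)%Z), ((h16, (1)%Z), ((h17, (1)%Z), ((h18, (1)%Z), ((h19, (1)%Z), ((h20, (-1)%Z), ((h21, (-1)%Z), ((h22, (2)%Z), ((h23, (-1)%Z), ((h24, (1)%Z), ((h25, (1)%Z), ((h26, (2)%Z), ((h27, (1)%Z), ((h28, (1)%Z), ((h29, (1)%Z), ((h30, (1)%Z), ((h31, (-1)%Z), ((h32, (1)%Z), ((h33, (1)%Z), ((h34, (1)%Z), ((h35, (1)%Z), ((h36, (-1)%Z), ((h37, (1)%Z), ((h38, (1)%Z), tt))))))))))))))))))))))))))))))))))))))).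
Qed.

Lemma caseE26 a : (1 <= a <= 4)%N -> t a (u + 12%:R) = - t a (u + W).
Proof.
case/andP; case: a => [|[|[|[|[|a]]]]] //= _ _;
 [have h := G1 | have h := G2 | have h := G3 | have h := G4]; rewrite /g in h; lc ((h, 1%Z), tt).
Qed.
End E26.

Section D34.
Variables (R : realType) (G : zmodType).
Local Notation C := (R[i]).
Variable t : nat -> C -> G.
Variable W : C.
Hypothesis D1 : forall v, t 1%N (v - 1) + t 1%N (v + 1) = t 2%N v.
Hypothesis D2 : forall v, t 2%N (v - 1) + t 2%N (v + 1) = t 1%N v + t 1%N (v - W) + t 1%N (v + W).
Hypothesis DP : forall v, t 2%N (v + W) = t 2%N v.
Variable u : C.
Let g (a : nat) (k m : int) : G := t a (u + k%:~R + m%:~R * W).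
Let D1g (k m km kp : int) : km = k - 1 -> kp = k + 1 -> g 1 km m + g 1 kp m = g 2 k m.
Proof. move=> -> ->; rewrite /g; have h := D1 (u + k%:~R + m%:~R * W); lc ((h, 1%Z), tt). Qed.
Let D2g (k m km kp mm mp : int) : km = k - 1 -> kp = k + 1 -> mm = m - 1 -> mp = m + 1 ->
  g 2 km m + g 2 kp m = g 1 k m + g 1 k mm + g 1 k mp.
Proof. move=> -> -> -> ->; rewrite /g; have h := D2 (u + k%:~R + m%:~R * W); lc ((h, 1%Z), tt). Qed.
Let DPg (k m mp : int) : mp = m + 1 -> g 2 k mp = g 2 k m.
Proof. move=> ->; rewrite /g; have h := DP (u + k%:~R + m%:~R * W); lc ((h, 1%Z), tt). Qed.
Let G1 : g 1 6 0 = - g 1 0 0.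
Proof.
  have h0 := DPg (1) (0) (1) erefl.
  have h1 := D1g (1) (-1) (0) (2) erefl erefl.
  have h2 := D1g (1) (-2) (0) (2) erefl erefl.
  have h3 := D1g (1) (1) (0) (2) erefl erefl.
  have h4 := D1g (1) (2) (0) (2) erefl erefl.
  have h5 := D2g (0) (0) (-1) (1) (-1) (1) erefl erefl erefl erefl.
  have h6 := D2g (2) (-1) (1) (3) (-2) (0) erefl erefl erefl erefl.
  have h7 := D2g (2) (1) (1) (3) (0) (2) erefl erefl erefl erefl.
  have h8 := DPg (-1) (0) (1) erefl.
  have h9 := DPg (-1) (-1) (0) erefl.
  have h10 := DPg (1) (1) (2) erefl.
  have h11 := D2g (4) (0) (3) (5) (-1) (1) erefl erefl erefl erefl.
  have h12 := D2g (2) (0) (1) (3) (-1) (1) erefl erefl erefl erefl.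
  have h13 := D1g (5) (0) (4) (6) erefl erefl.
  have h14 := DPg (1) (-2) (-1) erefl.
  have h15 := D1g (3) (1) (2) (4) erefl erefl.
  have h16 := D1g (1) (0) (0) (2) erefl erefl.
  have h17 := D1g (3) (-1) (2) (4) erefl erefl.
  have h18 := D2g (0) (-1) (-1) (1) (-2) (0) erefl erefl erefl erefl.
  have h19 := D2g (0) (1) (-1) (1) (0) (2) erefl erefl erefl erefl.
  have h20 := DPg (1) (-1) (0) erefl.
  lcn ((h0, (-2)%Z), ((h1, (-1)%Z), ((h2, (1)%Z), ((h3, (-1)%Z), ((h4, (1)%Z), ((h5, (-2)%Z), ((h6, (1)%Z), ((h7, (1)%Z), ((h8, (-1)%Z), ((h9, (1)%Z), ((h10, (1)%Z), ((h11, (1)%Z), ((h12, (-1)%Z), ((h13, (1)%Z), ((h14, (-1)%Z), ((h15, (1)%Z), ((h16, (1)%Z), ((h17, (1)%Z), ((h18, (1)%Z), ((h19, (1)%Z), ((h20, (2)%Z), tt))))))))))))))))))))).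
Qed.
Let G2 : g 2 6 0 = - g 2 0 0.
Proof.
  have h0 := D2g (1) (0) (0) (2) (-1) (1) erefl erefl erefl erefl.
  have h1 := D1g (2) (-2) (1) (3) erefl erefl.
  have h2 := DPg (2) (-2) (-1) erefl.
  have h3 := D1g (4) (1) (3) (5) erefl erefl.
  have h4 := D1g (0) (-1) (-1) (1) erefl erefl.
  have h5 := DPg (-2) (0) (1) erefl.
  have h6 := DPg (2) (1) (2) erefl.
  have h7 := D2g (-1) (0) (-2) (0) (-1) (1) erefl erefl erefl erefl.
  have h8 := DPg (-2) (-1) (0) erefl.
  have h9 := D2g (-1) (-1) (-2) (0) (-2) (0) erefl erefl erefl erefl.
  have h10 := D1g (4) (-1) (3) (5) erefl erefl.
  have h11 := D1g (2) (2) (1) (3) erefl erefl.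
  have h12 := DPg (0) (-1) (0) erefl.
  have h13 := D1g (0) (2) (-1) (1) erefl erefl.
  have h14 := D2g (5) (0) (4) (6) (-1) (1) erefl erefl erefl erefl.
  have h15 := D2g (3) (1) (2) (4) (0) (2) erefl erefl erefl erefl.
  have h16 := DPg (0) (-2) (-1) erefl.
  have h17 := D1g (0) (1) (-1) (1) erefl erefl.
  have h18 := D1g (4) (0) (3) (5) erefl erefl.
  have h19 := DPg (0) (0) (1) erefl.
  have h20 := D2g (3) (-1) (2) (4) (-2) (0) erefl erefl erefl erefl.
  have h21 := D1g (2) (0) (1) (3) erefl erefl.
  have h22 := DPg (0) (1) (2) erefl.
  have h23 := D1g (0) (-2) (-1) (1) erefl erefl.
  have h24 := D2g (-1) (1) (-2) (0) (0) (2) erefl erefl erefl erefl.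
  lcn ((h0, (1)%Z), ((h1, (1)%Z), ((h2, (-1)%Z), ((h3, (1)%Z), ((h4, (1)%Z), ((h5, (1)%Z), ((h6, (1)%Z), ((h7, (2)%Z), ((h8, (-1)%Z), ((h9, (-1)%Z), ((h10, (1)%Z), ((h11, (1)%Z), ((h12, (-1)%Z), ((h13, (-1)%Z), ((h14, (1)%Z), ((h15, (1)%Z), ((h16, (1)%Z), ((h17, (1)%Z), ((h18, (1)%Z), ((h19, (1)%Z), ((h20, (1)%Z), ((h21, (1)%Z), ((h22, (-1)%Z), ((h23, (-1)%Z), ((h24, (-1)%Z), tt))))))))))))))))))))))))).
Qed.

Lemma caseD34 a : (1 <= a <= 2)%N -> t a (u + 6%:R) = - t a u.
Proof.
case/andP; case: a => [|[|[|a]]] //= _ _;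
 [have h := G1 | have h := G2]; rewrite /g in h; lc ((h, 1%Z), tt).
Qed.
End D34.

Lemma fin_ns (R : realType) (G : zmodType) (f : R[i] -> G) (n : nat) (W : R[i]) :
  (forall v, f (v + n%:R) = - f (v + W)) -> (forall v, f (v + 2%:R * W) = f v) ->
  forall u, f (u + (2 * n)%:R) = f u.
Proof.
move=> H P u. have h1 := H (u + n%:R). have h2 := H (u + W). have h3 := P u.
lc ((h1, 1%Z), ((h2, (-1)%Z), ((h3, 1%Z), tt))).
Qed.
Lemma fin_s (R : realType) (G : zmodType) (f : R[i] -> G) (n : nat) :
  (forall v, f (v + n%:R) = - f v) -> forall u, f (u + (2 * n)%:R) = f u.
Proof.
move=> H u. have h1 := H (u + n%:R). have h2 := H u.
lc ((h1, 1%Z), ((h2, (-1)%Z), tt)).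
Qed.

Theorem theorem9p27 (R : realType) (X : twisted_type) (hb : R[i]) :
  tt_wf X ->
  (forall q : rat, hb != twopii R * ratr q) ->
  forall (G : zmodType) (t : nat -> R[i] -> G),
  T0_family X hb t ->
  forall a : nat, in_Isigma X a -> forall u : R[i],
    (if special_type X then t a (u + (hvee X)%:R) = - t a u
     else t a (u + (hvee X)%:R) = - t a (u + Omega X hb)) /\
    t a (u + (2 * hvee X)%:R) = t a u.
Proof.
move=> wf hgen G t [t0 tper teq] a Ha u.
have hb0 : hb != 0.
  apply/eqP=> h0; move: (hgen 0); by rewrite rmorph0 mulr0 h0 eqxx.
have perW : forall b, in_Isigma X b -> kappa_a X b = kappa X -> forall v, t b (v + Omega X hb) = t b v.
  move=> b Hb Hk v; have h := tper b Hb v 1; rewrite /period Hk in h.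
  rewrite -[RHS]h /Omega; congr (t b _); ring.
have per2W : forall b, in_Isigma X b -> kappa_a X b = 1%N -> kappa X = 2%N ->
    forall v, t b (v + 2%:R * Omega X hb) = t b v.
  move=> b Hb Hk Hk2 v; have h := tper b Hb v 1; rewrite /period Hk in h.
  rewrite -[RHS]h /Omega Hk2; congr (t b _). field. exact: hb0.
have per2 : forall b, in_Isigma X b -> kappa X = 2%N -> (kappa_a X b == 1%N) || (kappa_a X b == 2%N) ->
    forall v, t b (v + 2%:R * Omega X hb) = t b v.
  move=> b Hb Hk2 /orP[/eqP Hk|/eqP Hk] v; first exact: per2W.
  have h1 := perW b Hb (etrans Hk (esym Hk2)) (v + Omega X hb).
  have h2 := perW b Hb (etrans Hk (esym Hk2)) v.
  lc ((h1, 1%Z), ((h2, 1%Z), tt)).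
case: X wf hgen tper teq Ha perW per2W per2 => [r|r|r||] /= wf hgen tper teq Ha perW per2W per2.
-
  case: r wf tper teq Ha perW per2W per2 => [|[|p]] // wf tper teq Ha perW per2W per2.
  have Ha' : (a <= p.+2)%N by move: Ha; rewrite /in_Isigma /=; lia.
  have H : forall v, t a (v + (2 * p.+2)%:R) = - t a (v + Omega (A2odd p.+2) hb).
    move=> v; apply: (@caseA2odd R G t _ t0 p) => //.
    + move=> b w hb1 hb2; have := teq b ltac:(rewrite /in_Isigma /=; lia) w.
      by rewrite (_ : (b <= p.+2 - 1)%N = true) ?subn1 ?addn1 //; lia.
    + move=> w; have := teq p.+2 ltac:(rewrite /in_Isigma /=; lia) w.
      by rewrite (_ : (p.+2 <= p.+2 - 1)%N = false) ?subn1 //; lia.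
    + move=> w; apply: perW; [rewrite /in_Isigma /=; lia | by rewrite eqxx].
  split; first exact: H.
  apply: fin_ns H _ u. apply: per2 => //. by case: (a == _).
-
  case: r wf tper teq Ha perW per2W per2 => [|p] // wf tper teq Ha perW per2W per2.
  have Ha' : (a <= p.+1)%N by move: Ha; rewrite /in_Isigma /=; lia.
  have H : forall v, t a (v + (2 * p.+1 + 1)%:R) = - t a (v + Omega (A2even p.+1) hb).
    move=> v; apply: (@caseA2even R G t _ t0 p) => //.
    + move=> b w hb1 hb2; have := teq b ltac:(rewrite /in_Isigma /=; lia) w.
      by rewrite (_ : (b <= p.+1 - 1)%N = true) ?subn1 ?addn1 //; lia.
    + move=> w; have := teq p.+1 ltac:(rewrite /in_Isigma /=; lia) w.
      by rewrite (_ : (p.+1 <= p.+1 - 1)%N = false) ?subn1 //; lia.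
    + move=> w; apply: per2W => //; rewrite /in_Isigma /=; lia.
  split; first exact: H.
  apply: fin_ns H _ u. by apply: per2.
-
  case: r wf tper teq Ha perW per2W per2 => [|[|[|p]]] // wf tper teq Ha perW per2W per2.
  have Ha' : (a <= p.+3)%N by move: Ha; rewrite /in_Isigma /=; lia.
  have H := @caseD2 R G t (Omega (D2 p.+3) hb) t0 p.
  have {}H : forall v, if odd p.+3 then t a (v + (2 * p.+3)%:R) = - t a v
      else t a (v + (2 * p.+3)%:R) = - t a (v + Omega (D2 p.+3) hb).
    move=> v; apply: H; last exact: Ha'.
    + move=> b w hb1 hb2; have := teq b ltac:(rewrite /in_Isigma /=; lia) w.
      rewrite (_ : (b <= p.+3 - 2)%N = true); last by lia.
      by rewrite subn1 addn1.
    + move=> w; have := teq p.+2 ltac:(rewrite /in_Isigma /=; lia) w.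
      rewrite (_ : (p.+2 <= p.+3 - 2)%N = false); last by lia.
      rewrite (_ : (p.+2 == p.+3 - 1)%N = true); last by apply/eqP; lia.
      rewrite (_ : (p.+3 - 2 = p.+1)%N); last by lia.
      done.
    + move=> w; have := teq p.+3 ltac:(rewrite /in_Isigma /=; lia) w.
      rewrite (_ : (p.+3 <= p.+3 - 2)%N = false); last by lia.
      rewrite (_ : (p.+3 == p.+3 - 1)%N = false); last by apply/eqP; lia.
      rewrite (_ : (p.+3 - 1 = p.+2)%N); last by lia.
      done.
    + move=> w; rewrite addr0; apply: perW => //; rewrite /in_Isigma /=; lia.
  case: (odd p.+3) H => H; (split; [exact: H|]).
    exact: fin_s H u.
  apply: fin_ns H _ u. apply: per2 => //. by case: (a == _).
-
  have Ha' : (1 <= a <= 4)%N by [].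
  have I1 : in_Isigma E26 1 by []. have I2 : in_Isigma E26 2 by [].
  have I3 : in_Isigma E26 3 by []. have I4 : in_Isigma E26 4 by [].
  have H : forall v, t a (v + 12%:R) = - t a (v + Omega E26 hb).
    move=> v; apply: (@caseE26 R G t) => //.
    + exact: teq 1%N I1. + exact: teq 2%N I2. + exact: teq 3%N I3. + exact: teq 4%N I4.
    + exact: per2W 1%N I1 erefl erefl. + exact: per2W 2%N I2 erefl erefl.
    + exact: perW 3%N I3 erefl. + exact: perW 4%N I4 erefl.
  split; first exact: H.
  apply: fin_ns H _ u. apply: per2 => //. by case: ifP.
-
  have Ha' : (1 <= a <= 2)%N by [].
  have I1 : in_Isigma D34 1 by []. have I2 : in_Isigma D34 2 by [].
  have H : forall v, t a (v + 6%:R) = - t a v.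
    move=> v; apply: (@caseD34 R G t (Omega D34 hb)) => //.
    + exact: teq 1%N I1. + exact: teq 2%N I2.
    + exact: perW 2%N I2 erefl.
  split; first exact: H.
  exact: fin_s H u.
Qed.
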